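(* Let $R_{\mathrm{tr},\mathbb{F}}(\rho):=\min_{\sigma\in\mathbb{F}}\frac12\|\rho-\sigma\|_1$. If a state $\Phi$ satisfies $D_{\min,\mathbb{F}}(\Phi)=D_{s,\mathbb{F}}(\Phi)=:r$ or $D_{\min,\mathrm{aff}(\mathbb{F})}(\Phi)=D_{\max,\mathbb{F}}(\Phi)=:r$, then $R_{\mathrm{tr},\mathbb{F}}(\Phi)=1-2^{-r}$.
   Context: Finite-dimensional Hilbert space, $\log$ base 2. $\mathbb{F}$ is a convex and closed set of (free) states. $D_{\min,\mathbb{F}}(\rho)=\inf_{\sigma\in\mathbb{F}}(-\log\mathrm{Tr}[\Pi_\rho\sigma])$ ($\Pi_\rho$ support projector); $D_{\min,\mathrm{aff}(\mathbb{F})}(\rho)=\inf_{\sigma\in\mathrm{aff}(\mathbb{F})}\sup\{-\log\mathrm{Tr}[P\sigma]:0\le P\le\mathbb{1},\mathrm{Tr}[P\rho]=1\}$ with $\mathrm{aff}(\mathbb{F})$ the affine hull; $D_{\max,\mathbb{F}}(\rho)=\inf\{\log(1+s):\frac{\rho+s\tau}{1+s}\in\mathbb{F},\tau\text{ a state}\}$; $D_{s,\mathbb{F}}(\rho)=\inf\{\log(1+s):\frac{\rho+s\tau}{1+s}\in\mathbb{F},\tau\in\mathbb{F}\}$. *)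

(* Defs.v *)
From HB Require Import structures.
From mathcomp Require Import all_boot all_order all_algebra.
From mathcomp Require Import sesquilinear spectral.
From mathcomp Require Import complex.
From mathcomp Require Import all_classical all_reals all_analysis.

Set Implicit Arguments.
Unset Strict Implicit.
Unset Printing Implicit Defensive.

Import Order.TTheory GRing.Theory Num.Theory numFieldNormedType.Exports.
Local Open Scope ring_scope.
Local Open Scope classical_set_scope.

Section QuantumResourceDefs.
Variables (R : realType) (n : nat).
Local Notation C := R[i].
Local Notation M := 'M[C]_n.

Definition cr (t : R) : C := (t%:C)%C.

Definition adj (m p : nat) (A : 'M[C]_(m, p)) : 'M[C]_(p, m) := (map_mx Num.conj A)^T.

(* positive semidefinite: <v|A|v> is real and >= 0 for every vector v
   (order of the numClosedField R[i]: 0 <= z means z real nonnegative) *)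
Definition psd (A : M) : Prop := forall v : 'rV[C]_n, 0 <= (v *m A *m adj v) 0 0.

Definition state (rho : M) : Prop := psd rho /\ \tr rho = 1.

Definition convex_mset (F : set M) : Prop :=
  forall a b, F a -> F b -> forall t : R, 0 <= t <= 1 ->
    F (cr t *: a + cr (1 - t) *: b).

(* closedness in the usual (entrywise) topology of M_n(C) = R^(2 n^2) *)
Definition closed_mset (F : set M) : Prop :=
  forall (u : nat -> M) (A : M), (forall k, F (u k)) ->
    (forall i j, (fun k => complex.Re (u k i j)) @ \oo --> (complex.Re (A i j) : R)) ->
    (forall i j, (fun k => complex.Im (u k i j)) @ \oo --> (complex.Im (A i j) : R)) ->
    F A.

Definition free_states (F : set M) : Prop :=
  F `<=` state /\ convex_mset F /\ closed_mset F.

Definition aff (F : set M) : set M :=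
  [set sigma | exists (k : nat) (s : 'I_k -> M) (l : 'I_k -> R),
     (forall i, F (s i)) /\ \sum_(i < k) l i = 1 /\
     sigma = \sum_(i < k) cr (l i) *: s i].

(* support projector: projector onto the span of the eigenvectors with
   nonzero eigenvalue, built from the spectral decomposition
   rho = invmx P *m diag_mx d *m P *)
Definition suppProj (rho : M) : M :=
  invmx (spectralmx rho)
    *m diag_mx (\row_i (if spectral_diag rho 0 i == 0 then 0 else 1))
    *m spectralmx rho.

Definition mlog (t : R) : \bar R :=
  if 0 < t then (- (ln t / ln 2))%:E else +oo%E.

Definition log2 (t : R) : R := ln t / ln 2.

Definition Dmin (F : set M) (rho : M) : \bar R :=
  ereal_inf [set mlog (complex.Re (\tr (suppProj rho *m sigma))) | sigma in F].

Definition test_ops (rho : M) : set M :=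
  [set P | psd P /\ psd (1%:M - P) /\ \tr (P *m rho) = 1].

Definition Dmin_aff (F : set M) (rho : M) : \bar R :=
  ereal_inf [set ereal_sup [set mlog (complex.Re (\tr (P *m sigma))) | P in test_ops rho]
            | sigma in aff F].

Definition Dmax (F : set M) (rho : M) : \bar R :=
  ereal_inf [set (log2 (1 + s))%:E | s in
    [set s : R | 0 <= s /\ exists tau, state tau /\
        F ((cr (1 + s))^-1 *: (rho + cr s *: tau))]].

Definition Ds (F : set M) (rho : M) : \bar R :=
  ereal_inf [set (log2 (1 + s))%:E | s in
    [set s : R | 0 <= s /\ exists tau, F tau /\
        F ((cr (1 + s))^-1 *: (rho + cr s *: tau))]].

(* trace norm ||X||_1 = Tr sqrt(X^dagger X) = sum of the square roots of the
   eigenvalues of X^dagger X *)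
Definition trnorm (X : M) : R :=
  complex.Re (\sum_(i < n) 2.-root (spectral_diag (adj X *m X) 0 i)).

Definition Rtr (F : set M) (rho : M) : \bar R :=
  ereal_inf [set (trnorm (rho - sigma) / 2)%:E | sigma in F].

End QuantumResourceDefs.

(* Main.v *)
Require Import Defs.
From HB Require Import structures.
From mathcomp Require Import all_boot all_order all_algebra.
From mathcomp Require Import sesquilinear spectral.
From mathcomp Require Import complex.
From mathcomp Require Import all_classical all_reals all_analysis.
From mathcomp Require Import ring lra.
Import Order.TTheory GRing.Theory Num.Theory numFieldNormedType.Exports.
Local Open Scope ring_scope.
Section Aux.
Variables (R : realType) (n : nat).
Local Notation C := R[i].
Local Notation M := 'M[C]_n.
Local Open Scope sesquilinear_scope.

Lemma adjE m p (A : 'M[C]_(m, p)) : adj A = A ^t Num.conj.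
Proof. by rewrite /adj map_trmx. Qed.

Lemma adjM m p q (A : 'M[C]_(m, p)) (B : 'M[C]_(p, q)) :
  adj (A *m B) = adj B *m adj A.
Proof. by rewrite /adj map_mxM trmx_mul. Qed.

Lemma adjK m p (A : 'M[C]_(m, p)) : adj (adj A) = A.
Proof.
by apply/matrixP=> i j; rewrite !mxE conjCK.
Qed.

Lemma adjD m p (A B : 'M[C]_(m, p)) : adj (A + B) = adj A + adj B.
Proof. by apply/matrixP=> i j; rewrite !mxE rmorphD. Qed.

Lemma adjN m p (A : 'M[C]_(m, p)) : adj (- A) = - adj A.
Proof. by apply/matrixP=> i j; rewrite !mxE rmorphN. Qed.

Lemma adjZ m p (c : C) (A : 'M[C]_(m, p)) : adj (c *: A) = Num.conj c *: adj A.
Proof. by apply/matrixP=> i j; rewrite !mxE rmorphM. Qed.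

Lemma adj1 : adj (1%:M : M) = 1%:M.
Proof.
apply/matrixP=> i j; rewrite !mxE eq_sym.
by case: (i == j); rewrite /= ?conjC1 ?conjC0.
Qed.

Lemma vAv (v w : 'rV[C]_n) (A : M) :
  (v *m A *m adj w) 0 0 = \sum_i \sum_j v 0 i * A i j * Num.conj (w 0 j).
Proof.
rewrite mxE exchange_big /=; apply: eq_bigr => j _.
rewrite !mxE big_distrl /=; by apply: eq_bigr => i _.
Qed.

Definition ev (i : 'I_n) : 'rV[C]_n := delta_mx 0 i.

Lemma evAev (A : M) i j x y : ((x *: ev i + y *: ev j) *m A *m adj (x *: ev i + y *: ev j)) 0 0
  = x * Num.conj x * A i i + x * Num.conj y * A i j + y * Num.conj x * A j i
    + y * Num.conj y * A j j.
Proof.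
have E : forall a b, (ev a *m A *m adj (ev b)) 0 0 = A a b.
  move=> a b; rewrite vAv (bigD1 a) //= [X in _ + X = _]big1 => [|k kb]; last first.
    by apply: big1 => l _; rewrite !mxE (negbTE kb) andbF mul0r mul0r.
  rewrite addr0 (bigD1 b) //= [X in _ + X = _]big1 => [|l lb]; last by rewrite !mxE (negbTE lb) andbF conjC0 mulr0.
  by rewrite !mxE !eqxx conjC1 mul1r mulr1 !addr0.
rewrite adjD !adjZ !mulmxDl !mulmxDr -!scalemxAl -!scalemxAr.
have key : forall M1 M2 M3 M4 : 'M[C]_1,
  (x *: (x^* *: M1) + x *: (y^* *: M2) + (y *: (x^* *: M3) + y *: (y^* *: M4))) 0 0
  = x * x^* * M1 0 0 + x * y^* * M2 0 0 + y * x^* * M3 0 0 + y * y^* * M4 0 0.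
  by move=> *; rewrite !mxE !mulrA addrA.
by rewrite key !E.
Qed.
End Aux.
Lemma herm_alg (C : numClosedFieldType) (p q a b : C) : p^* = p -> q^* = q ->
  (p + a + b + q)^* = p + a + b + q ->
  (p - 'i * a + 'i * b + q)^* = p - 'i * a + 'i * b + q -> a^* = b.
Proof.
move=> hp hq h3 h4.
rewrite !rmorphD !rmorphN !rmorphM /= hp hq conjCi in h3 h4.
have e1 : a^* + b^* = a + b.
  apply/eqP; rewrite -subr_eq0; apply/eqP.
  transitivity ((p + a^* + b^* + q) - (p + a + b + q)); first ring.
  by rewrite h3 subrr.
have e2 : 'i * (a^* - b^*) = 'i * (b - a).
  apply/eqP; rewrite -subr_eq0; apply/eqP.
  transitivity ((p - - 'i * a^* + - 'i * b^* + q) - (p - 'i * a + 'i * b + q)); first ring.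
  by rewrite h4 subrr.
have e3 : a^* - b^* = b - a by apply: (mulfI (neq0Ci C)).
have : 2 * a^* = 2 * b.
  transitivity ((a^* + b^*) + (a^* - b^*)); first ring.
  by rewrite e1 e3; ring.
by apply: mulfI; rewrite pnatr_eq0.
Qed.

Section Aux2.
Variables (R : realType) (n : nat).
Local Notation C := R[i].
Local Notation M := 'M[C]_n.
Local Notation ev := (@ev R n).

Lemma psd_conj (A : M) (v : 'rV[C]_n) : psd A -> ((v *m A *m adj v) 0 0)^* = (v *m A *m adj v) 0 0.
Proof. by move=> hA; apply/conj_Creal/ger0_real/hA. Qed.

Lemma psd_herm (A : M) : psd A -> adj A = A.
Proof.
move=> hA; apply/matrixP => i j; rewrite !mxE.
have Q : forall x y : C, (x * x^* * A i i + x * y^* * A i j + y * x^* * A j i + y * y^* * A j j)^*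
   = x * x^* * A i i + x * y^* * A i j + y * x^* * A j i + y * y^* * A j j.
  by move=> x y; rewrite -evAev; apply: psd_conj.
have hi : 'i * - 'i = 1 :> C by rewrite mulrN -expr2 sqrCi opprK.
have h10 := Q 1 0; have h01 := Q 0 1; have h11 := Q 1 1; have h1i := Q 1 'i.
rewrite conjC1 conjC0 !mul1r !mulr0 !mul0r !addr0 in h10.
rewrite conjC1 conjC0 !mul1r !mulr0 !mul0r !add0r in h01.
rewrite conjC1 !mul1r in h11.
rewrite conjC1 conjCi hi !mulr1 !mul1r mulNr in h1i.
by rewrite -(@herm_alg _ _ _ _ _ h10 h01 h11 h1i) conjCK.
Qed.
End Aux2.
Set Implicit Arguments. Unset Strict Implicit. Unset Printing Implicit Defensive.
Section Aux3.
Variables (R : realType) (n : nat).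
Local Notation C := R[i].
Local Notation M := 'M[C]_n.
Local Open Scope sesquilinear_scope.

Definition Dg (d : 'I_n -> R) : M := diag_mx (\row_i ((d i)%:C)%C).

Lemma char_poly_conj (U A : M) : adj U *m U = 1%:M ->
  char_poly (adj U *m A *m U) = char_poly A.
Proof.
move=> hU; rewrite /char_poly /char_poly_mx.
set mp := map_mx (@polyC C).
have -> : 'X%:M - mp (adj U *m A *m U) = mp (adj U) *m ('X%:M - mp A) *m mp U.
  rewrite mulmxBr mulmxBl mul_mx_scalar -scalemxAl -map_mxM hU map_mx1.
  by rewrite /mp !map_mxM scalemx1.
rewrite !det_mulmx !det_map_mx mulrAC -rmorphM -det_mulmx hU det1 rmorph1.
by rewrite mul1r.
Qed.

Lemma char_poly_diag (r : 'rV[C]_n) : char_poly (diag_mx r) = \prod_(i < n) ('X - (r 0 i)%:P).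
Proof.
rewrite char_poly_trig ?diag_mx_is_trig //.
by apply: eq_bigr => i _; rewrite mxE eqxx mulr1n.
Qed.

Lemma diag_perm (r s : 'rV[C]_n) : char_poly (diag_mx r) = char_poly (diag_mx s) ->
  forall g : C -> C, \sum_i g (r 0 i) = \sum_i g (s 0 i).
Proof.
rewrite !char_poly_diag => h g.
have : perm_eq [seq r 0 i | i <- index_enum 'I_n] [seq s 0 i | i <- index_enum 'I_n].
  by apply: prod_XsubC_eq; rewrite !big_map.
move=> hp.
rewrite -(big_map (fun i => r 0 i) xpredT g) -(big_map (fun i => s 0 i) xpredT g).
exact: perm_big.
Qed.
End Aux3.
Section Aux4.
Variables (R : realType) (n : nat).
Local Notation C := R[i].
Local Notation M := 'M[C]_n.
Local Notation Dg := (@Dg R n).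
Local Open Scope sesquilinear_scope.

Lemma herm_hermsym (A : M) : adj A = A -> A \is hermsymmx.
Proof. by move=> h; apply/is_hermitianmxP; rewrite expr0 scale1r -adjE h. Qed.

Lemma unitary_adj (U : M) : U \is unitarymx -> U *m adj U = 1%:M /\ adj U *m U = 1%:M.
Proof.
move=> /unitarymxP h; rewrite adjE; split => //.
exact: mulmx1C.
Qed.

Lemma herm_decomp (A : M) : adj A = A -> exists (U : M) (d : 'I_n -> R),
  [/\ U *m adj U = 1%:M, adj U *m U = 1%:M & A = adj U *m Dg d *m U].
Proof.
move=> h; have hn := hermitian_normalmx (herm_hermsym h).
have hr := hermitian_spectral_diag_real (herm_hermsym h).
have /orthomx_spectralP E := hn.
have hu := spectral_unitarymx A.
exists (spectralmx A), (fun i => complex.Re (spectral_diag A 0 i)).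
have [h1 h2] := unitary_adj hu; split; [exact: h1 | exact: h2 |].
rewrite {1}E (invmx_unitary hu) -adjE; congr (_ *m _ *m _).
congr diag_mx; apply/matrixP => i j; rewrite !mxE ord1.
apply/esym/RRe_real; move/mxOverP: hr; apply.
Qed.

Lemma adjDg (d : 'I_n -> R) : adj (Dg d) = Dg d.
Proof.
apply/matrixP => i j; rewrite !mxE; case: (eqVneq i j) => [<-|ne].
  rewrite !mulr1n; exact: conjc_real.
by rewrite !mulr0n conjC0.
Qed.

Lemma DgM (d e : 'I_n -> R) : Dg d *m Dg e = Dg (fun i => d i * e i).
Proof.
rewrite /Dg mulmx_diag; congr diag_mx; apply/matrixP => i j; rewrite !mxE.
by rewrite rmorphM.
Qed.

Lemma trnorm_decomp (X U : M) (d : 'I_n -> R) : U *m adj U = 1%:M -> adj U *m U = 1%:M ->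
  X = adj U *m Dg d *m U -> trnorm X = \sum_i `|d i|.
Proof.
move=> h1 h2 hX.
have XX : adj X *m X = adj U *m Dg (fun i => d i ^+ 2) *m U.
  rewrite hX !adjM adjK adjDg !mulmxA -[adj U *m _ *m _ *m adj U]mulmxA h1 mulmx1.
  by rewrite -[adj U *m Dg d *m Dg d]mulmxA DgM.
have hh : adj (adj X *m X) = adj X *m X by rewrite adjM adjK.
have hn := hermitian_normalmx (herm_hermsym hh).
have /orthomx_spectralP E := hn.
have hu := spectral_unitarymx (adj X *m X).
have [v1 v2] := unitary_adj hu.
rewrite (invmx_unitary hu) -adjE in E.
set sp := spectral_diag (adj X *m X) in E *.
set V := spectralmx (adj X *m X) in E v1 v2 hu.
have cp : char_poly (diag_mx sp) = char_poly (Dg (fun i => d i ^+ 2)).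
  transitivity (char_poly (adj X *m X)).
    by rewrite E char_poly_conj.
  by rewrite XX char_poly_conj.
have := diag_perm cp (fun z => 2.-root z) => hs.
rewrite /trnorm hs.
have -> : \sum_i 2.-root ((\row_i ((d i ^+ 2)%:C)%C : 'rV[C]_n) 0 i) = \sum_i ((`|d i|)%:C)%C.
  apply: eq_bigr => i _; rewrite mxE.
  rewrite -real_normK ?num_real // rmorphXn sqrCK //.
  by rewrite ler0c normr_ge0.
by rewrite -rmorph_sum.
Qed.
End Aux4.
Section Aux5.
Variables (R : realType) (n : nat).
Local Notation C := R[i].
Local Notation M := 'M[C]_n.
Local Notation Dg := (@Dg R n).

Lemma diag_entry (U A : M) i :
  (U *m A *m adj U) i i = (row i U *m A *m adj (row i U)) 0 0.
Proof.
rewrite vAv mxE [RHS]exchange_big; apply: eq_bigr => l _.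
rewrite mxE big_distrl; apply: eq_bigr => k _.
by rewrite !mxE.
Qed.

Lemma psd_diag (U A : M) i : psd A -> 0 <= (U *m A *m adj U) i i.
Proof. by move=> hA; rewrite diag_entry; apply: hA. Qed.

Lemma tr_conj (U A : M) : adj U *m U = 1%:M -> \tr (U *m A *m adj U) = \tr A.
Proof. by move=> h; rewrite mxtrace_mulC mulmxA h mul1mx. Qed.

Lemma ge0C (z : C) : 0 <= z -> z = ((complex.Re z)%:C)%C /\ 0 <= complex.Re z.
Proof.
move=> hz; split; first by rewrite RRe_real // ger0_real.
by move: hz; rewrite lecE => /andP[_ ].
Qed.

Lemma decomp_inv (X U : M) (d : 'I_n -> R) : U *m adj U = 1%:M -> adj U *m U = 1%:M ->
  X = adj U *m Dg d *m U -> forall i, (U *m X *m adj U) i i = ((d i)%:C)%C.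
Proof.
move=> h1 h2 hX i; rewrite hX !mulmxA h1 mul1mx -mulmxA h1 mulmx1.
by rewrite /Dg !mxE eqxx mulr1n.
Qed.

Lemma mxsubE (A B : M) i j : (A - B) i j = A i j - B i j.
Proof. by rewrite !mxE. Qed.

Lemma state_tr (A : M) : state A -> complex.Re (\tr A) = 1.
Proof. by case=> _ ->. Qed.

Lemma decomp_entries (rho tau U : M) (d : 'I_n -> R) : U *m adj U = 1%:M -> adj U *m U = 1%:M ->
  rho - tau = adj U *m Dg d *m U -> psd rho -> psd tau ->
  forall i, d i = complex.Re ((U *m rho *m adj U) i i) - complex.Re ((U *m tau *m adj U) i i).
Proof.
move=> h1 h2 hX pr pt i.
have := decomp_inv h1 h2 hX i.
rewrite mulmxBr mulmxBl mxsubE => /(congr1 (@complex.Re R)) /= <-.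
by rewrite raddfB.
Qed.

Lemma sum_norm_le2 (rho tau U : M) (d : 'I_n -> R) : U *m adj U = 1%:M -> adj U *m U = 1%:M ->
  rho - tau = adj U *m Dg d *m U -> state rho -> state tau -> \sum_i `|d i| <= 2.
Proof.
move=> h1 h2 hX sr st.
have hd := decomp_entries h1 h2 hX sr.1 st.1.
have sa : \sum_i complex.Re ((U *m rho *m adj U) i i) = 1.
  rewrite -raddf_sum.
  have -> : \sum_i (U *m rho *m adj U) i i = \tr (U *m rho *m adj U) by [].
  by rewrite -(state_tr sr) -(tr_conj rho h2).
have sb : \sum_i complex.Re ((U *m tau *m adj U) i i) = 1.
  rewrite -raddf_sum.
  have -> : \sum_i (U *m tau *m adj U) i i = \tr (U *m tau *m adj U) by [].
  by rewrite -(state_tr st) -(tr_conj tau h2).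
apply: (@le_trans _ _ (\sum_i (complex.Re ((U *m rho *m adj U) i i) + complex.Re ((U *m tau *m adj U) i i)))).
  apply: ler_sum => i _; rewrite hd.
  have [_ a0] := ge0C (psd_diag U i sr.1).
  have [_ b0] := ge0C (psd_diag U i st.1).
  rewrite ler_norml; apply/andP; split; lra.
by rewrite big_split /= sa sb.
Qed.
End Aux5.
Section Aux6.
Variables (R : realType) (n : nat).
Local Notation C := R[i].
Local Notation M := 'M[C]_n.
Local Notation Dg := (@Dg R n).
Local Open Scope sesquilinear_scope.

Lemma sum_diag_state (A U : M) : adj U *m U = 1%:M -> state A ->
  \sum_i complex.Re ((U *m A *m adj U) i i) = 1.
Proof.
move=> h2 sA; rewrite -raddf_sum.
have -> : \sum_i (U *m A *m adj U) i i = \tr (U *m A *m adj U) by [].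
by rewrite -(state_tr sA) -(tr_conj A h2).
Qed.

Lemma mxoneE i : (1%:M : M) i i = 1.
Proof. by rewrite mxE eqxx. Qed.

Lemma test_bound (rho sig P U : M) (d : 'I_n -> R) : U *m adj U = 1%:M -> adj U *m U = 1%:M ->
  rho - sig = adj U *m Dg d *m U -> state rho -> state sig -> psd P -> psd (1%:M - P) ->
  complex.Re (\tr (P *m (rho - sig))) <= (\sum_i `|d i|) / 2.
Proof.
move=> h1 h2 hX sr ss pP pP1.
have hd := decomp_entries h1 h2 hX sr.1 ss.1.
have sd : \sum_i d i = 0.
  rewrite (eq_bigr _ (fun i _ => hd i)) sumrB (sum_diag_state h2 sr) (sum_diag_state h2 ss).
  by rewrite subrr.
have trE : \tr (P *m (rho - sig)) = \sum_i (U *m P *m adj U) i i * ((d i)%:C)%C.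
  rewrite hX !mulmxA mxtrace_mulC !mulmxA mul_mx_diag.
  by apply: eq_bigr => i _; rewrite !mxE.
have hq : forall i, (U *m P *m adj U) i i = ((complex.Re ((U *m P *m adj U) i i))%:C)%C /\
   0 <= complex.Re ((U *m P *m adj U) i i) <= 1.
  move=> i; have [e1 e2] := ge0C (psd_diag U i pP); split => //.
  rewrite e2 /=.
  have := psd_diag U i pP1; rewrite mulmxBr mulmxBl mulmx1 h1 mxsubE mxoneE.
  move=> /ge0C [_]; rewrite raddfB /=.
  by rewrite subr_ge0.
rewrite trE raddf_sum.
apply: (@le_trans _ _ (\sum_i ((`|d i| + d i) / 2))).
  apply: ler_sum => i _.
  have [e1 /andP [q0 q1]] := hq i.
  rewrite e1 -rmorphM /=.
  set q := complex.Re _ in q0 q1 *.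
  have [d0|d0] := leP 0 (d i).
    by rewrite ger0_norm //; nra.
  by rewrite ltr0_norm //; nra.
by rewrite -mulr_suml big_split /= sd addr0.
Qed.

Lemma trnorm_scale (rho tau : M) (c : R) : 0 <= c -> state rho -> state tau ->
  trnorm (cr c *: (rho - tau)) <= 2 * c.
Proof.
move=> c0 sr st.
have hh : adj (rho - tau) = rho - tau by rewrite adjD adjN !psd_herm //; [exact: st.1 | exact: sr.1].
have [U [d [h1 h2 hX]]] := herm_decomp hh.
have hcX : cr c *: (rho - tau) = adj U *m Dg (fun i => c * d i) *m U.
  rewrite hX scalemxAl scalemxAr; congr (_ *m _ *m _).
  apply/matrixP => i j; rewrite !mxE /cr.
  case: (i == j); rewrite ?mulr1n ?mulr0n ?mulr0 //.
  by rewrite rmorphM.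
rewrite (trnorm_decomp h1 h2 hcX).
have := sum_norm_le2 h1 h2 hX sr st.
have -> : \sum_i `|c * d i| = c * \sum_i `|d i|.
  rewrite mulr_sumr; apply: eq_bigr => i _.
  by rewrite normrM ger0_norm.
nra.
Qed.
End Aux6.
Section Aux7.
Variables (R : realType) (n : nat).
Local Notation C := R[i].
Local Notation M := 'M[C]_n.
Local Open Scope sesquilinear_scope.

Lemma psd_conjdiag (V : M) (e : 'rV[C]_n) : (forall i, 0 <= e 0 i) ->
  psd (adj V *m diag_mx e *m V).
Proof.
move=> he v.
have -> : v *m (adj V *m diag_mx e *m V) *m adj v
    = (v *m adj V) *m diag_mx e *m adj (v *m adj V).
  by rewrite adjM adjK !mulmxA.
rewrite mul_mx_diag mxE; apply: sumr_ge0 => j _; rewrite !mxE.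
by rewrite mulrAC; apply: mulr_ge0; [exact: mul_conjC_ge0 | exact: he].
Qed.

Lemma tr_conj' (U A : M) : U *m adj U = 1%:M -> \tr (adj U *m A *m U) = \tr A.
Proof. by move=> h; rewrite mxtrace_mulC mulmxA h mul1mx. Qed.

Lemma supp_test (rho : M) : state rho ->
  [/\ psd (suppProj rho), psd (1%:M - suppProj rho) & \tr (suppProj rho *m rho) = 1].
Proof.
move=> sr.
have hh := @psd_herm R n rho sr.1.
have hn := hermitian_normalmx (herm_hermsym hh).
have /orthomx_spectralP E := hn.
have hu := spectral_unitarymx rho.
have [h1 h2] := unitary_adj hu.
rewrite (invmx_unitary hu) -adjE in E.
rewrite /suppProj (invmx_unitary hu) -adjE.
set V := spectralmx rho in E h1 h2 hu *.
set sp := spectral_diag rho in E *.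
set e := \row_i (if sp 0 i == 0 then 0 else 1) : 'rV[C]_n.
split.
- apply: psd_conjdiag => i; rewrite mxE; case: ifP => _ //; exact: ler01.
- set e' := \row_i (if sp 0 i == 0 then 1 else 0) : 'rV[C]_n.
  have -> : 1%:M - adj V *m diag_mx e *m V = adj V *m diag_mx e' *m V.
    have -> : diag_mx e' = 1%:M - diag_mx e.
      apply/matrixP => i j; rewrite !mxE; case: (i == j); rewrite ?mulr1n ?mulr0n ?subr0 //.
      by case: ifP; rewrite ?subr0 ?subrr.
    by rewrite mulmxBr mulmxBl mulmx1 h2.
  apply: psd_conjdiag => i; rewrite mxE; case: ifP => _ //; exact: ler01.
- rewrite {1}E !mulmxA -[adj V *m _ *m V *m adj V]mulmxA h1 mulmx1.
  rewrite -[adj V *m _ *m _]mulmxA tr_conj' // mulmx_diag mxtrace_diag.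
  transitivity (\tr rho); last exact: sr.2.
  rewrite [in RHS]E tr_conj' // mxtrace_diag.
  apply: eq_bigr => i _; rewrite !mxE.
  by case: eqP => [->|_]; rewrite ?mul0r ?mul1r.
Qed.
End Aux7.
Section Real.
Variable R : realType.

Lemma pow2E (r : R) : 2 `^ (- r) = expR (- r * ln 2).
Proof. by rewrite /powR pnatr_eq0. Qed.

Lemma ln2_gt0 : 0 < ln (2 : R).
Proof. by apply: ln_gt0; rewrite ltr1n. Qed.

Lemma key1 (t r : R) : 0 < t -> r <= - (ln t / ln 2) -> t <= 2 `^ (- r).
Proof.
move=> t0 h; rewrite pow2E -[X in X <= _](lnK t0) ler_expR.
have L0 := ln2_gt0.
have : r * ln 2 <= - (ln t / ln 2) * ln 2 by rewrite ler_wpM2r // ltW.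
rewrite mulNr -mulrA mulVf ?mulr1; last by rewrite gt_eqF.
lra.
Qed.

Lemma key2 (t r : R) : 0 < t -> - (ln t / ln 2) <= r -> 2 `^ (- r) <= t.
Proof.
move=> t0 h; rewrite pow2E -[X in _ <= X](lnK t0) ler_expR.
have L0 := ln2_gt0.
have : - (ln t / ln 2) * ln 2 <= r * ln 2 by rewrite ler_wpM2r // ltW.
rewrite mulNr -mulrA mulVf ?mulr1; last by rewrite gt_eqF.
lra.
Qed.

Lemma mlog_mono (t u : R) : 0 < u -> u <= t -> - (ln t / ln 2) <= - (ln u / ln 2).
Proof.
move=> u0 ut; have t0 : 0 < t by apply: lt_le_trans ut.
rewrite lerN2 ler_pM2r ?invr_gt0 ?ln2_gt0 //.
by rewrite ler_ln // posrE.
Qed.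
End Real.
Section Main.
Variables (R : realType) (n : nat).
Local Notation C := R[i].
Local Notation M := 'M[C]_n.
Local Open Scope classical_set_scope.

Lemma ReB1 (z : C) : complex.Re (1 - z) = 1 - complex.Re z.
Proof. by rewrite raddfB. Qed.

Lemma lower_bound (F : set M) (Phi sig P : M) :
  free_states F -> state Phi -> F sig -> psd P -> psd (1%:M - P) -> \tr (P *m Phi) = 1 ->
  1 - complex.Re (\tr (P *m sig)) <= trnorm (Phi - sig) / 2.
Proof.
move=> [FS _] sP Fs pP pP1 tP.
have ss := FS _ Fs.
have hh : adj (Phi - sig) = Phi - sig.
  by rewrite adjD adjN !psd_herm //; [exact: ss.1 | exact: sP.1].
have [U [d [h1 h2 hX]]] := herm_decomp hh.
rewrite (trnorm_decomp h1 h2 hX).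
have := test_bound h1 h2 hX sP ss pP pP1.
rewrite mulmxBr.
have -> : \tr (P *m Phi - P *m sig) = \tr (P *m Phi) - \tr (P *m sig) by rewrite linearB.
by rewrite tP ReB1.
Qed.

Lemma mix_eq (A T : M) (s : R) : 0 <= s ->
  A - (cr (1 + s))^-1 *: (A + cr s *: T) = cr (s / (1 + s)) *: (A - T).
Proof.
move=> s0; apply/matrixP => i j; rewrite !mxE /cr.
have hne : ((1 + s)%:C)%C != 0 :> C.
  by apply: lt0r_neq0; rewrite ltcR; lra.
rewrite rmorphM fmorphV.
move: hne; rewrite rmorphD rmorph1 => hne.
by field.
Qed.

Lemma upper_one (F : set M) (Phi tau : M) (s : R) : 0 <= s -> state Phi -> state tau ->
  F ((cr (1 + s))^-1 *: (Phi + cr s *: tau)) -> (Rtr F Phi <= (s / (1 + s))%:E)%E.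
Proof.
move=> s0 sP st Fs.
apply: (le_trans (ereal_inf_lbound _)); first by exists ((cr (1 + s))^-1 *: (Phi + cr s *: tau)).
rewrite lee_fin mix_eq //.
have q0 : 0 <= s / (1 + s) by rewrite divr_ge0 //; lra.
have := trnorm_scale q0 sP st.
lra.
Qed.

Lemma final (X : \bar R) (r : R) (S : set R) : (forall s, S s -> 0 <= s) ->
  ereal_inf [set (log2 (1 + s))%:E | s in S] = r%:E ->
  ((1 - 2 `^ (- r))%:E <= X)%E -> (forall s, S s -> (X <= (s / (1 + s))%:E)%E) ->
  X = (1 - 2 `^ (- r))%:E.
Proof.
move=> S0 hinf lb ub.
have [s0 Ss0] : exists s, S s.
  apply: contrapT => hne; move: hinf.
  have -> : [set (@log2 R (1 + s))%:E | s in S] = set0.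
    by apply/seteqP; split => y //= [s Ss _]; apply: hne; exists s.
  by rewrite ereal_inf0.
case: X lb ub => [x| |] lb ub; last first.
- by move: lb.
- by have := ub s0 Ss0.
rewrite lee_fin in lb; congr (_%:E); apply/le_anti; rewrite lb andbT.
rewrite leNgt; apply/negP => hx.
have L0 := @ln2_gt0 R.
have hs0 := S0 _ Ss0.
have x1 : x < 1.
  have := ub s0 Ss0; rewrite lee_fin ler_pdivlMr; last by lra.
  nra.
have hl : ((- (ln (1 - x) / ln 2))%:E <= r%:E)%E.
  rewrite -hinf; apply: le_ereal_inf_tmp => _ [s Ss <-]; rewrite lee_fin /log2.
  have s0' := S0 _ Ss.
  have := ub s Ss; rewrite lee_fin ler_pdivlMr; last by lra.
  move=> hxs.
  rewrite -mulNr ler_pM2r ?invr_gt0 //.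
  rewrite -lnV ?posrE; last by lra.
  rewrite ler_ln ?posrE ?invr_gt0; [|lra|lra].
  rewrite -[X in X <= _]mul1r ler_pdivrMr; [nra | lra].
rewrite lee_fin in hl.
have := key2 (_ : 0 < 1 - x) hl.
have : 0 < 1 - x by lra.
move=> h1 /(_ h1) h2.
clear ub hinf; lra.
Qed.
End Main.
Unset Implicit Arguments.
Theorem proposition13 (R : realType) (n : nat) (F : set 'M[R[i]]_n)
  (Phi : 'M[R[i]]_n) (r : R) :
  free_states F -> state Phi ->
  ((Dmin F Phi = r%:E /\ Ds F Phi = r%:E) \/
   (Dmin_aff F Phi = r%:E /\ Dmax F Phi = r%:E)) ->
  Rtr F Phi = (1 - 2 `^ (- r))%:E.
Proof.
move=> hF sP H.
have [FS _] := hF.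
have LB : forall sig, F sig -> 1 - 2 `^ (- r) <= trnorm (Phi - sig) / 2.
  move=> sig Fs; case: H => [[hmin _]|[hmin _]].
  - have [p1 p2 p3] := supp_test sP.
    have := lower_bound hF sP Fs p1 p2 p3.
    set t := complex.Re (\tr (suppProj Phi *m sig)).
    have ht : t <= 2 `^ (- r).
      have : (r%:E <= mlog t)%E.
        rewrite -hmin /Dmin; apply: ereal_inf_lbound; by exists sig.
      rewrite /mlog; case: ifP => [t0|]; last first.
        move=> /negbT; rewrite -leNgt => t0 _; exact: le_trans t0 (powR_ge0 _ _).
      by rewrite lee_fin => hr; exact: key1 t0 hr.
    lra.
  - apply/negPn/negP; rewrite -ltNge => hc.
    set c := trnorm (Phi - sig) / 2 in hc.
    have hS : (r%:E <= ereal_sup [set mlog (complex.Re (\tr (P *m sig))) | P in test_ops Phi])%E.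
      rewrite -hmin /Dmin_aff; apply: ereal_inf_lbound; exists sig => //.
      exists 1%N, (fun _ => sig), (fun _ => 1); split => //; split; first by rewrite big_ord1.
      by rewrite big_ord1 /cr scale1r.
    have p0 : 0 < 2 `^ (- r) by rewrite pow2E expR_gt0.
    have c1 : 0 < 1 - c by lra.
    have hsup : (ereal_sup [set mlog (complex.Re (\tr (P *m sig))) | P in test_ops Phi]
                 <= (- (ln (1 - c) / ln 2))%:E)%E.
      apply: ge_ereal_sup => _ [P [pP [pP1 tP]] <-].
      have := lower_bound hF sP Fs pP pP1 tP; rewrite -/c => hl.
      have tc : 1 - c <= complex.Re (\tr (P *m sig)) by lra.
      have t0 : 0 < complex.Re (\tr (P *m sig)) by lra.
      by rewrite /mlog t0 lee_fin; exact: mlog_mono.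
    have := le_trans hS hsup; rewrite lee_fin => hr.
    have := key1 c1 hr.
    lra.
have LBe : ((1 - 2 `^ (- r))%:E <= Rtr F Phi)%E.
  apply: le_ereal_inf_tmp => _ [sig Fs <-]; rewrite lee_fin; exact: LB.
case: H => [[_ hs]|[_ hs]].
- apply: (final _ hs LBe).
    by move=> s [].
  move=> s [s0 [tau [Ft Fm]]].
  exact: upper_one s0 sP (FS _ Ft) Fm.
- apply: (final _ hs LBe).
    by move=> s [].
  move=> s [s0 [tau [st Fm]]].
  exact: upper_one s0 sP st Fm.
Qed.
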